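(* Let $0\to A_i\to B_i\to C\to 0$ ($i=1,2$) be short exact sequences of finite abelian groups, and put $B=B_1\times_C B_2$. Assume that the sequence for $i=2$ is a direct sum of sequences of the form $0\to\mathbb Z/n\mathbb Z\to\mathbb Z/nb_j\mathbb Z\to\mathbb Z/b_j\mathbb Z\to0$ (first map multiplication by $b_j$, second the natural projection), for a fixed positive integer $n$ and positive integers $b_j$, and that $A_1$ is annihilated by $n$. Then the projection $B\to B_2$ splits. *)

(* Defs.v *)
(* finite abelian groups are finite Z-modules (finZmodType),
   group homomorphisms are additive maps {additive U -> V}. *)
From HB Require Import structures.
From mathcomp Require Import all_boot all_order all_algebra.
Set Implicit Arguments. Unset Strict Implicit. Unset Printing Implicit Defensive.
Import GRing.Theory.
Local Open Scope ring_scope.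

Definition short_exact (A B C : zmodType) (f : A -> B) (g : B -> C) : Prop :=
  [/\ injective f,
      (forall c : C, exists b : B, g b = c) &
      (forall b : B, g b = 0 <-> exists a : A, f a = b)].

Definition fibprod (B1 B2 C : zmodType) (g1 : B1 -> C) (g2 : B2 -> C)
  : pred (B1 * B2) := fun p => g1 p.1 == g2 p.2.

Definition proj2_splits (B1 B2 C : zmodType) (g1 : B1 -> C) (g2 : B2 -> C)
  : Prop :=
  exists s : {additive B2 -> B1 * B2},
    (forall y, s y \in fibprod g1 g2) /\ (forall y, (s y).2 = y).

(* The sequence 0 -> A --f--> B --g--> C -> 0 is (isomorphic to) the direct
   sum over j < m of the sequences
       0 -> Z/n -(mult b_j)-> Z/(n b_j) -> Z/b_j -> 0.
   Internally: B has elements x_j with n b_j x_j = 0 such that every element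
   of B is uniquely of the form sum_j k_j x_j with 0 <= k_j < n b_j (i.e.
   B = (+)_j <x_j> with <x_j> ~ Z/(n b_j)), and the image of f (= ker g) is
   the subgroup (+)_j <b_j x_j> (the copies of Z/n embedded by mult. by b_j).
   Then C ~ B / f(A) ~ (+)_j Z/b_j with g the natural projection. *)
Definition std_dirsum_seq (A B C : zmodType) (f : A -> B) (g : B -> C)
  (n m : nat) (b : 'I_m -> nat) : Prop :=
  exists x : 'I_m -> B,
  [/\ forall j, x j *+ (n * b j) = 0,
      (forall y : B, exists k : 'I_m -> nat,
          (forall j, (k j < n * b j)%N) /\ y = \sum_(j < m) x j *+ k j),
      (forall k k' : 'I_m -> nat,
          (forall j, (k j < n * b j)%N) -> (forall j, (k' j < n * b j)%N) ->
          \sum_(j < m) x j *+ k j = \sum_(j < m) x j *+ k' j ->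
          forall j, k j = k' j) &
      (forall y : B, (exists a : A, f a = y) <->
          exists k : 'I_m -> nat, y = \sum_(j < m) x j *+ (b j * k j))].

(* Main.v *)
Require Import Defs.
From HB Require Import structures.
From mathcomp Require Import all_boot all_order all_algebra.
Set Implicit Arguments. Unset Strict Implicit. Unset Printing Implicit Defensive.
Import GRing.Theory.
Local Open Scope ring_scope.

Definition addw (U V : zmodType) (h : U -> V) (H : nmod_morphism h) : U -> V := h.
HB.instance Definition _ (U V : zmodType) (h : U -> V) (H : nmod_morphism h) :=
  GRing.isNmodMorphism.Build U V (@addw U V h H) H.

Lemma mk_additive (U V : zmodType) (h : U -> V) :
  nmod_morphism h -> exists s : {additive U -> V}, forall x, s x = h x.
Proof. move=> H; by exists (@addw U V h H : {additive U -> V}). Qed.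

Lemma mulrn_mod (V : zmodType) (z : V) (N k : nat) :
  z *+ N = 0 -> z *+ k = z *+ (k %% N).
Proof.
move=> hz; rewrite {1}(divn_eq k N) mulrnDr mulnC mulrnA hz mul0rn add0r //.
Qed.

Theorem mainTheorem5
  (A1 B1 A2 B2 C : finZmodType)
  (f1 : {additive A1 -> B1}) (g1 : {additive B1 -> C})
  (f2 : {additive A2 -> B2}) (g2 : {additive B2 -> C})
  (n m : nat) (b : 'I_m -> nat)
  (hn : (0 < n)%N) (hb : forall j, (0 < b j)%N)
  (ex1 : short_exact f1 g1) (ex2 : short_exact f2 g2)
  (hseq2 : std_dirsum_seq f2 g2 n b)
  (hA1 : forall a : A1, a *+ n = 0) :
  proj2_splits g1 g2.
Proof.
case: ex1 => _ surj1 ker1; case: ex2 => _ _ ker2.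
case: hseq2 => x [hord hcoord huniq himg].
have hY : forall j, exists y : B1, g1 y = g2 (x j) /\ y *+ (n * b j) = 0.
  move=> j; have [z hz] := surj1 (g2 (x j)).
  have hxj : g2 (x j *+ b j) = 0.
    apply/ker2/himg; exists (fun i => if i == j then 1%N else 0%N).
    rewrite (bigD1 j) //= eqxx muln1 big1 ?addr0 // => i /negbTE ->.
    by rewrite muln0.
  have [a ha] : exists a, f1 a = z *+ b j.
    by apply/ker1; rewrite raddfMn /= hz -raddfMn.
  exists z; split => //.
  by rewrite mulnC mulrnA -ha -raddfMn /= hA1 raddf0.
have [Y hYp] := fin_all_exists hY.
have [K hK] := fin_all_exists hcoord.
have npos : forall j, (0 < n * b j)%N by move=> j; rewrite muln_gt0 hn hb.
have key : forall k : 'I_m -> nat,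
    \sum_(j < m) Y j *+ K (\sum_(j < m) x j *+ k j) j = \sum_(j < m) Y j *+ k j.
  move=> k; set y := \sum_(j < m) x j *+ k j.
  have [hb1 hy] := hK y.
  have hy2 : y = \sum_(j < m) x j *+ (k j %% (n * b j)).
    by apply: eq_bigr => j _; apply: mulrn_mod.
  have E := huniq _ _ hb1 (fun j => ltn_pmod _ (npos j)) (etrans (esym hy) hy2).
  apply: eq_bigr => j _; rewrite E; apply/esym/mulrn_mod; exact: (hYp j).2.
pose h (y : B2) : B1 * B2 := (\sum_(j < m) Y j *+ K y j, y).
have hm : nmod_morphism h.
  split.
    rewrite /h; congr (_, _).
    have -> : (0 : B2) = \sum_(j < m) x j *+ (fun _ => 0%N) j.
      by rewrite big1.
    by rewrite key big1.
  move=> y y'; rewrite /h; congr (_, _).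
  have -> : y + y' = \sum_(j < m) x j *+ (fun j => K y j + K y' j)%N j.
    by rewrite (hK y).2 (hK y').2 -big_split /=; apply: eq_bigr => j _;
      rewrite mulrnDr -?(hK y).2 -?(hK y').2.
  rewrite key -big_split /=; apply: eq_bigr => j _; exact: mulrnDr.
have [s hs] := mk_additive hm.
exists s; split=> y; rewrite hs //.
rewrite /fibprod /h unfold_in /= raddf_sum {2}(hK y).2 raddf_sum; apply/eqP.
by apply: eq_bigr => j _; rewrite !raddfMn /= (hYp j).1.
Qed.
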